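(* Let $\Phi:B(H_{in})\to B(H_{out})$ be a quantum channel. Let $V=\mathrm{Range}\big((\mathrm{id}\otimes\pi_{op})(C_\Phi)\big)\subseteq H_{in}\otimes\overline{H_{out}}$, where $(\mathrm{id}\otimes\pi_{op})(C_\Phi)$ is regarded as a linear operator on $H_{in}\otimes\overline{H_{out}}$. Then, under the Hilbert space identification $B(H_{in})\otimes B(\overline{H_{out}})\cong (H_{in}\otimes\overline{H_{out}})\otimes(\overline{H_{in}}\otimes H_{out})$ given by $\theta_{\xi,\eta}\otimes\theta_{\overline{\zeta},\overline{\omega}}\mapsto(\xi\otimes\overline{\zeta})\otimes(\overline{\eta}\otimes\omega)$, one has $$(\mathrm{id}\otimes\pi_{op})(\tilde S_\Phi)\cong V\otimes\overline{V}.$$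
   Context: All Hilbert spaces are finite dimensional; inner products are linear in the second variable. $\theta_{\xi,\eta}(\eta')=\langle\eta,\eta'\rangle\xi$. A quantum channel is a trace-preserving completely positive map. $O=B(H_{out})$, and $O^{op}$ is its opposite algebra (product $a*b=ba$). $\overline{H}$ is the conjugate Hilbert space, $\xi\mapsto\overline{\xi}$ the antilinear identification; $\pi_{op}:O^{op}\to B(\overline{H_{out}})$ is the faithful representation $\pi_{op}(T)\overline{\xi}=\overline{T^*\xi}$. Let $\{e_i\}$ be an orthonormal basis of $H_{in}$ and $e_{ij}$ the matrix units. $C_\Phi=\sum_{i,j}e_{ij}\otimes\Phi(e_{ji})\in B(H_{in})\otimes O^{op}$. $\mathcal{M}_\Phi=H_{in}\otimes O^{op}$ is the right Hilbert $O^{op}$-module with $(\xi\otimes a)*x=\xi\otimes(a*x)$ and $\langle\xi\otimes a,\eta\otimes b\rangle_{O^{op}}=\langle\xi,\eta\rangle a^**b$, so that $\mathcal{L}(\mathcal{M}_\Phi)\cong B(H_{in})\otimes O^{op}$ and $C_\Phi\in\mathcal{L}(\mathcal{M}_\Phi)$. A Stinespring module related to $\Phi$ is a pair $(\mathcal{E},W)$, $\mathcal{E}$ a Hilbert $O^{op}$-module, $W$ an adjointable module map $\mathcal{M}_\Phi\to\mathcal{E}$ with $W^*W=C_\Phi$. The quantum confusability multigraph is $\tilde S_\Phi=W^*\mathcal{L}(\mathcal{E})W\subseteq B(H_{in})\otimes O^{op}$ (independent of the choice of Stinespring module). *)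

(* Defs.v *)
From HB Require Import structures.
From mathcomp Require Import all_boot all_order all_algebra.
Set Implicit Arguments. Unset Strict Implicit. Unset Printing Implicit Defensive.
Import Order.TTheory GRing.Theory Num.Theory.
Local Open Scope ring_scope.

(* The complex numbers are an arbitrary numClosedFieldType C
   (e.g. algC, or complex R).  H_in = C^n with orthonormal basis e_i,
   H_out = C^m with orthonormal basis f_k; operators are matrices in these
   bases; O = B(H_out) = 'M[C]_m. *)

Section Defs.
Variable C : numClosedFieldType.

Definition adjmx (p q : nat) (A : 'M[C]_(p, q)) : 'M[C]_(q, p) :=
  (map_mx (@Num.conj C) A)^T.

Definition psd (N : nat) (X : 'M[C]_N) : Prop :=
  forall v : 'cV[C]_N, 0 <= (adjmx v *m X *m v) 0 0.

(* splitting a flattened index of 'I_(p*q) (H_1 (x) H_2, basis u_i (x) w_k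
   with flattening mxvec_index) into its pair of indices *)
Definition pidx (p q : nat) (r : 'I_(p * q)) : 'I_p * 'I_q :=
  enum_val (cast_ord (esym (mxvec_cast p q)) r).

(* the ampliation id_k (x) Phi acting on B(C^k (x) H_in) = 'M_(k*n) *)
Definition ampl (n m k : nat) (Phi : 'M[C]_n -> 'M[C]_m) (X : 'M[C]_(k * n))
  : 'M[C]_(k * m) :=
  \matrix_(r, s)
    (Phi (\matrix_(i, j) X (mxvec_index (pidx r).1 i) (mxvec_index (pidx s).1 j)))
      (pidx r).2 (pidx s).2.

Definition completely_positive (n m : nat) (Phi : 'M[C]_n -> 'M[C]_m) : Prop :=
  forall (k : nat) (X : 'M[C]_(k * n)), psd X -> psd (@ampl n m k Phi X).

Definition trace_preserving (n m : nat) (Phi : 'M[C]_n -> 'M[C]_m) : Prop :=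
  forall X : 'M[C]_n, \tr (Phi X) = \tr X.

Definition quantum_channel (n m : nat) (Phi : {linear 'M[C]_n -> 'M[C]_m}) : Prop :=
  completely_positive Phi /\ trace_preserving Phi.

(* product of the opposite algebra O^op : a * b = b a *)
Definition opmul (m : nat) (a b : 'M[C]_m) : 'M[C]_m := b *m a.

(* (pre-)Hilbert right O^op-module: complex vector space with a right
   O^op-action and an O^op-valued inner product, linear in the 2nd variable *)
Record HilbModOp (m : nat) := HilbModOpMk {
  hm_car :> lmodType C;
  hm_act : hm_car -> 'M[C]_m -> hm_car;
  hm_ip  : hm_car -> hm_car -> 'M[C]_m;
  hm_act_addl : forall a x y, hm_act (x + y) a = hm_act x a + hm_act y a;
  hm_act_scalel : forall a (l : C) x, hm_act (l *: x) a = l *: hm_act x a;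
  hm_act_addr : forall x a b, hm_act x (a + b) = hm_act x a + hm_act x b;
  hm_act_scaler : forall x (l : C) a, hm_act x (l *: a) = l *: hm_act x a;
  hm_act1 : forall x, hm_act x 1%:M = x;
  hm_actM : forall x a b, hm_act x (opmul a b) = hm_act (hm_act x a) b;
  hm_ip_addr : forall x y z, hm_ip x (y + z) = hm_ip x y + hm_ip x z;
  hm_ip_scaler : forall x (l : C) y, hm_ip x (l *: y) = l *: hm_ip x y;
  hm_ip_act : forall x y a, hm_ip x (hm_act y a) = opmul (hm_ip x y) a;
  hm_ip_adj : forall x y, hm_ip y x = adjmx (hm_ip x y);
  hm_ip_pos : forall x, psd (hm_ip x x);
  hm_ip_def : forall x, hm_ip x x = 0 -> x = 0
}.

Definition adjointable (m : nat) (E : HilbModOp m) (T : E -> E) : Prop :=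
  exists T' : E -> E, forall x y, hm_ip (T x) y = hm_ip x (T' y).

(* M_Phi = H_in (x) O^op : sum_i e_i (x) a_i is stored as (a_i)_i *)
Definition MPhi (n m : nat) := {ffun 'I_n -> 'M[C]_m}.

(* <sum e_i (x) a_i, sum e_j (x) b_j> = sum_i a_i^* * b_i  (product of O^op) *)
Definition ipM (n m : nat) (x y : MPhi n m) : 'M[C]_m :=
  \sum_i opmul (adjmx (x i)) (y i).

(* an element of B(H_in) (x) O^op, sum_{i,j} e_ij (x) c i j *)
Definition BT (n m : nat) := 'I_n -> 'I_n -> 'M[C]_m.

(* its action on M_Phi: (e_ij (x) c)(e_j (x) a) = e_i (x) (c * a) *)
Definition bt_act (n m : nat) (c : BT n m) (x : MPhi n m) : MPhi n m :=
  [ffun i => \sum_j opmul (c i j) (x j)].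

(* C_Phi = sum_{i,j} e_ij (x) Phi(e_ji) *)
Definition CPhi (n m : nat) (Phi : 'M[C]_n -> 'M[C]_m) : BT n m :=
  fun i j => Phi (delta_mx j i).

(* Stinespring module related to Phi: W : M_Phi -> E adjointable with
   adjoint Wadj, and W^* W = C_Phi *)
Definition stinespring (n m : nat) (Phi : 'M[C]_n -> 'M[C]_m) (E : HilbModOp m)
  (W : MPhi n m -> E) (Wadj : E -> MPhi n m) : Prop :=
  (forall x y, hm_ip (W x) y = ipM x (Wadj y)) /\
  (forall x, Wadj (W x) = bt_act (CPhi Phi) x).

(* c lies in the quantum confusability multigraph W^* L(E) W *)
Definition in_Stilde (n m : nat) (E : HilbModOp m) (W : MPhi n m -> E)
  (Wadj : E -> MPhi n m) (c : BT n m) : Prop :=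
  exists T : E -> E, adjointable T /\ forall x, Wadj (T (W x)) = bt_act c x.

(* coordinates (in the basis fbar_k) of the conjugate vector vbar *)
Definition barv (N : nat) (v : 'cV[C]_N) : 'cV[C]_N := map_mx (@Num.conj C) v.

(* pi_op(T) on conj(H_out): pi_op(T) xibar = conj(T^* xi); its matrix in the
   basis fbar_l has column l = coordinates of conj(T^* f_l) *)
Definition pi_op (m : nat) (T : 'M[C]_m) : 'M[C]_m :=
  \matrix_(k, l) (barv (adjmx T *m delta_mx l (0 : 'I_1))) k 0.

(* (id (x) pi_op)(c) as an operator on H_in (x) conj(H_out),
   matrix in the basis e_i (x) fbar_k (flattened with mxvec_index) *)
Definition idpi (n m : nat) (c : BT n m) : 'M[C]_(n * m) :=
  \matrix_(r, s) pi_op (c (pidx r).1 (pidx s).1) (pidx r).2 (pidx s).2.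

(* The identification B(H_in) (x) B(conj H_out) = (H_in (x) conj H_out) (x)
   (conj H_in (x) H_out), theta_{xi,eta} (x) theta_{zetabar,omegabar} |->
   (xi (x) zetabar) (x) (etabar (x) omega).  An element of the right-hand side
   is recorded by its coefficient array t r s w.r.t. the basis
   (e_i (x) fbar_k) (x) (ebar_j (x) f_l), r = (i,k), s = (j,l).  Since
   e_ij (x) e_kl |-> (e_i (x) fbar_k) (x) (ebar_j (x) f_l), the coefficient array
   of the image of X is the matrix of X. *)
Definition tensor_ident (N : nat) (X : 'M[C]_N) : 'M[C]_N := \matrix_(r, s) X r s.

(* coefficient array of v (x) wbar in (K) (x) (conj K), where wbar is given by
   its coordinates in the conjugate basis *)
Definition etens (N : nat) (v wbar : 'cV[C]_N) : 'M[C]_N :=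
  \matrix_(r, s) (v r 0 * wbar s 0).

Definition inV (n m : nat) (Phi : 'M[C]_n -> 'M[C]_m) (v : 'cV[C]_(n * m)) : Prop :=
  exists u : 'cV[C]_(n * m), v = idpi (CPhi Phi) *m u.

Definition in_VVbar (n m : nat) (Phi : 'M[C]_n -> 'M[C]_m) (t : 'M[C]_(n * m)) : Prop :=
  exists (K : nat) (vs ws : 'I_K -> 'cV[C]_(n * m)),
    (forall k, inV Phi (vs k) /\ inV Phi (ws k)) /\
    t = \sum_(k < K) etens (vs k) (barv (ws k)).

End Defs.

(* Main.v *)
Require Import Defs.
From HB Require Import structures.
From mathcomp Require Import all_boot all_order all_algebra.
Import Order.TTheory GRing.Theory Num.Theory.
Local Open Scope ring_scope.

Lemma pidxK n m (i : 'I_n) (j : 'I_m) : pidx (mxvec_index i j) = (i, j).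
Proof. by rewrite /pidx /mxvec_index cast_ordK enum_rankK. Qed.

Lemma pidxKV n m (r : 'I_(n * m)) : mxvec_index (pidx r).1 (pidx r).2 = r.
Proof. by rewrite /pidx /mxvec_index -surjective_pairing enum_valK cast_ordKV. Qed.

Lemma sum_pidx {R : nmodType} {n m} (F : 'I_n -> 'I_m -> R) :
  \sum_(r : 'I_(n * m)) F (pidx r).1 (pidx r).2 = \sum_i \sum_j F i j.
Proof.
rewrite (reindex _ (curry_mxvec_bij n m)) /= pair_bigA /=.
by apply: eq_bigr => -[i j] _ /=; rewrite pidxK.
Qed.

Lemma pi_opE (C : numClosedFieldType) m (T : 'M[C]_m) k l : pi_op T k l = T l k.
Proof.
rewrite /pi_op /barv !mxE (bigD1 l) //= big1 => [|a /negbTE al].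
  by rewrite !mxE !eqxx mulr1 addr0 conjCK.
by rewrite !mxE al mulr0.
Qed.

Lemma idpiE (C : numClosedFieldType) n m (c : BT C n m) r s :
  idpi c r s = c (pidx r).1 (pidx s).1 (pidx s).2 (pidx r).2.
Proof. by rewrite /idpi mxE pi_opE. Qed.

Definition vecp (C : numClosedFieldType) n m (p : 'I_m) (x : MPhi C n m) : 'cV[C]_(n * m) :=
  \col_r (x (pidx r).1) p (pidx r).2.
Definition mkx (C : numClosedFieldType) n m (q : 'I_m) (u : 'cV[C]_(n * m)) : MPhi C n m :=
  [ffun i => \matrix_(a, l) if a == q then u (mxvec_index i l) 0 else 0].

Arguments vecp {C n m}.
Arguments mkx {C n m}.

Lemma vecp_bt (C : numClosedFieldType) n m (c : BT C n m) x p :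
  vecp p (bt_act c x) = idpi c *m vecp p x.
Proof.
apply/matrixP => r z; rewrite ord1 !mxE /bt_act ffunE summxE.
rewrite (eq_bigr (fun s => c (pidx r).1 (pidx s).1 (pidx s).2 (pidx r).2 *
   x (pidx s).1 p (pidx s).2)); last by move=> s _; rewrite idpiE !mxE.
rewrite (sum_pidx (fun j l => c (pidx r).1 j l (pidx r).2 * x j p l)).
by apply: eq_bigr => j _; rewrite /opmul mxE; apply: eq_bigr => l _; rewrite mulrC.
Qed.

Lemma ipM_vecp (C : numClosedFieldType) n m (x z : MPhi C n m) p q :
  ipM x z p q = (adjmx (vecp q x) *m vecp p z) 0 0.
Proof.
rewrite /ipM summxE mxE.
rewrite (eq_bigr (fun r => (x (pidx r).1 q (pidx r).2)^* * z (pidx r).1 p (pidx r).2));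
  last by move=> r _; rewrite /adjmx !mxE.
rewrite (sum_pidx (fun j l => (x j q l)^* * z j p l)).
apply: eq_bigr => j _; rewrite /opmul mxE; apply: eq_bigr => l _.
by rewrite /adjmx !mxE mulrC.
Qed.

Lemma vecp_mkx (C : numClosedFieldType) n m (p q : 'I_m) (u : 'cV[C]_(n * m)) :
  vecp p (mkx q u) = if p == q then u else 0.
Proof.
apply/matrixP => r z; rewrite ord1 !mxE ffunE mxE pidxKV.
by case: (p == q); rewrite ?mxE.
Qed.

Lemma vecp_inj (C : numClosedFieldType) n m (x y : MPhi C n m) :
  (forall p, vecp p x = vecp p y) -> x = y.
Proof.
move=> H; apply/ffunP => i; apply/matrixP => a l.
have := congr1 (fun M : 'cV[C]_(n * m) => M (mxvec_index i l) 0) (H a).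
by rewrite !mxE pidxK.
Qed.

Lemma ipM0l (C : numClosedFieldType) n m (y : MPhi C n m) : ipM 0 y = 0.
Proof.
apply/matrixP => p q; rewrite ipM_vecp [RHS]mxE mxE.
by rewrite big1 // => r _; rewrite !mxE ffunE mxE rmorph0 mul0r.
Qed.

Lemma ipM0r (C : numClosedFieldType) n m (y : MPhi C n m) : ipM y 0 = 0.
Proof.
apply/matrixP => p q; rewrite ipM_vecp [RHS]mxE mxE.
by rewrite big1 // => r _; rewrite !mxE ffunE mxE mulr0.
Qed.

Lemma bt_act0 (C : numClosedFieldType) n m (c : BT C n m) : bt_act c 0 = 0.
Proof.
apply: vecp_inj => p; rewrite vecp_bt.
have -> : vecp p (0 : MPhi C n m) = 0 by apply/matrixP => r z; rewrite !mxE ffunE mxE.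
by rewrite mulmx0.
Qed.

Lemma vecp0 (C : numClosedFieldType) n m (p : 'I_m) : vecp p (0 : MPhi C n m) = 0.
Proof. by apply/matrixP => r z; rewrite !mxE ffunE mxE. Qed.

Lemma adjmx0 (C : numClosedFieldType) p q : adjmx (0 : 'M[C]_(p, q)) = 0.
Proof. by apply/matrixP => i j; rewrite !mxE rmorph0. Qed.

Lemma hm_ip0r (C : numClosedFieldType) m (E : HilbModOp C m) (x : E) : hm_ip x 0 = 0.
Proof. by have := hm_ip_scaler x 0 0; rewrite !scale0r. Qed.

Lemma hm_ip0l (C : numClosedFieldType) m (E : HilbModOp C m) (x : E) : hm_ip 0 x = 0.
Proof. by rewrite hm_ip_adj hm_ip0r adjmx0. Qed.

Lemma delta_form (C : numClosedFieldType) N (M : 'M[C]_N) (a b : 'I_N) :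
  (adjmx (delta_mx a (0 : 'I_1)) *m (M *m delta_mx b (0 : 'I_1))) 0 0 = M a b.
Proof.
have -> : adjmx (delta_mx a (0 : 'I_1)) = delta_mx 0 a :> 'M[C]_(1, N).
  apply/matrixP => i j; rewrite !ord1 !mxE !eqxx andbT /=.
  by case: (_ == _); rewrite ?rmorph1 ?rmorph0.
rewrite (mulmxA (delta_mx 0 a) M (delta_mx b 0)).
by rewrite -rowE -colE !mxE.
Qed.


Lemma W_ker {C : numClosedFieldType} {n m} {Phi : 'M[C]_n -> 'M[C]_m} {E : HilbModOp C m}
  {W : MPhi C n m -> E} {Wadj : E -> MPhi C n m} (HS : stinespring Phi W Wadj)
  (q : 'I_m) (u : 'cV[C]_(n * m)) :
  idpi (CPhi Phi) *m u = 0 -> W (mkx q u) = 0.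
Proof.
case: HS => H1 H2 Pu; apply: hm_ip_def; rewrite H1 H2.
have -> : bt_act (CPhi Phi) (mkx q u) = 0.
  apply: vecp_inj => p; rewrite vecp_bt vecp_mkx vecp0.
  by case: (p == q); rewrite ?mulmx0.
by rewrite ipM0r.
Qed.

Lemma W0 {C : numClosedFieldType} {n m} {Phi : 'M[C]_n -> 'M[C]_m} {E : HilbModOp C m}
  {W : MPhi C n m -> E} {Wadj : E -> MPhi C n m} (HS : stinespring Phi W Wadj) :
  W 0 = 0.
Proof. by case: HS => H1 H2; apply: hm_ip_def; rewrite H1 ipM0l. Qed.

Lemma Wadj0 {C : numClosedFieldType} {n m} {Phi : 'M[C]_n -> 'M[C]_m} {E : HilbModOp C m}
  {W : MPhi C n m -> E} {Wadj : E -> MPhi C n m} (HS : stinespring Phi W Wadj) :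
  Wadj 0 = 0.
Proof. by rewrite -(W0 HS); case: HS => _ ->; rewrite bt_act0. Qed.

Lemma perp {C : numClosedFieldType} {n m} {Phi : 'M[C]_n -> 'M[C]_m} {E : HilbModOp C m}
  {W : MPhi C n m -> E} {Wadj : E -> MPhi C n m} (HS : stinespring Phi W Wadj)
  (u : 'cV[C]_(n * m)) (p : 'I_m) (e : E) :
  idpi (CPhi Phi) *m u = 0 -> adjmx u *m vecp p (Wadj e) = 0.
Proof.
move=> Pu; have := HS.1 (mkx p u) e; rewrite (W_ker HS p _ Pu) hm_ip0l.
move=> /(congr1 (fun M : 'M[C]_m => M p p)); rewrite ipM_vecp vecp_mkx eqxx mxE => h.
by apply/matrixP => i j; rewrite !ord1 -h mxE.
Qed.

Lemma P_sa {C : numClosedFieldType} {n m} {Phi : 'M[C]_n -> 'M[C]_m} {E : HilbModOp C m}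
  {W : MPhi C n m -> E} {Wadj : E -> MPhi C n m} (HS : stinespring Phi W Wadj) :
  map_mx (@Num.conj C) (idpi (CPhi Phi)) = (idpi (CPhi Phi))^T.
Proof.
set P := idpi (CPhi Phi).
suff key : forall a b, P a b = (P b a)^*.
  by apply/matrixP => a b; rewrite mxE [RHS]mxE key conjCK.
move=> a b; set p := (pidx a).2.
case: HS => H1 H2.
have := hm_ip_adj (W (mkx p (delta_mx b (0 : 'I_1)))) (W (mkx p (delta_mx a (0 : 'I_1))));
rewrite !H1 !H2.
move=> /(congr1 (fun M : 'M[C]_m => M p p)); rewrite [RHS]mxE [in RHS]mxE.
by rewrite !ipM_vecp !vecp_bt !vecp_mkx eqxx !delta_form.
Qed.

Definition unidpi {C : numClosedFieldType} {n m} (M : 'M[C]_(n * m)) : BT C n m :=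
  fun i j => \matrix_(l, k) M (mxvec_index i k) (mxvec_index j l).

Lemma idpi_unidpi {C : numClosedFieldType} {n m} (M : 'M[C]_(n * m)) : idpi (unidpi M) = M.
Proof. by apply/matrixP => r s; rewrite idpiE /unidpi mxE !pidxKV. Qed.

Lemma adjmxM {C : numClosedFieldType} {p q r} (A : 'M[C]_(p, q)) (B : 'M[C]_(q, r)) :
  adjmx (A *m B) = adjmx B *m adjmx A.
Proof. by rewrite /adjmx map_mxM trmx_mul. Qed.

Lemma adjmxK {C : numClosedFieldType} {p q} (A : 'M[C]_(p, q)) : adjmx (adjmx A) = A.
Proof. by rewrite /adjmx map_trmx trmxK map_mxCK. Qed.

Lemma ipM_bt {C : numClosedFieldType} {n m} (M : 'M[C]_(n * m)) (a b : MPhi C n m) :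
  ipM (bt_act (unidpi M) a) b = ipM a (bt_act (unidpi (adjmx M)) b).
Proof.
apply/matrixP => p q; rewrite !ipM_vecp !vecp_bt !idpi_unidpi.
by rewrite adjmxM mulmxA.
Qed.

Lemma ipM_sym {C : numClosedFieldType} {n m} (a b : MPhi C n m) :
  ipM a b = adjmx (ipM b a).
Proof.
apply/matrixP => p q; rewrite [RHS]mxE [RHS]mxE !ipM_vecp.
have -> : ((adjmx (vecp p b) *m vecp q a) 0 0)^* = adjmx (adjmx (vecp p b) *m vecp q a) 0 0.
  by rewrite !mxE.
by rewrite adjmxM adjmxK.
Qed.

Lemma etensE {C : numClosedFieldType} {N} (v w : 'cV[C]_N) :
  etens v (barv w) = v *m adjmx w.
Proof. by apply/matrixP => r s; rewrite !mxE big_ord1 !mxE. Qed.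

Lemma colmul {C : numClosedFieldType} {p q r} (A : 'M[C]_(p, q)) (B : 'M[C]_(q, r)) i j :
  (A *m B) i j = (A *m col j B) i 0.
Proof. by rewrite !mxE; apply: eq_bigr => k _; rewrite !mxE. Qed.

Lemma Pcol {C : numClosedFieldType} {p q r} (A : 'M[C]_(p, q)) (B : 'M[C]_(q, r)) j :
  A *m B = 0 -> A *m col j B = 0.
Proof. by move=> h; apply/matrixP => i k; rewrite ord1 -colmul h !mxE. Qed.

Lemma mul_delta_col {C : numClosedFieldType} {p q} (A : 'M[C]_(p, q)) j k :
  (A *m delta_mx j (0 : 'I_1)) k 0 = A k j.
Proof. by rewrite -colE mxE. Qed.

Theorem proposition3p19 (C : numClosedFieldType) (n m : nat)
  (Phi : {linear 'M[C]_n -> 'M[C]_m}) (E : HilbModOp C m)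
  (W : MPhi C n m -> E) (Wadj : E -> MPhi C n m) :
  quantum_channel Phi ->
  stinespring Phi W Wadj ->
  forall t : 'M[C]_(n * m),
    (exists c : BT C n m, in_Stilde W Wadj c /\ t = tensor_ident (idpi c))
    <-> in_VVbar Phi t.
Proof.
move=> _ HS t.
set P := idpi (CPhi Phi).
have Psa := P_sa HS; rewrite -/P in Psa.
have PadjP : adjmx P = P by rewrite /adjmx Psa trmxK.
have PGP : P *m pinvmx P *m P = P by apply: mulmxKpV; exact: submx_refl.
split.
- move=> [c [[T [[T' HT] hc]] ->]].
  set Y := idpi c.
  have -> : tensor_ident Y = Y by apply/matrixP => r s; rewrite mxE.
  have hT0 : T 0 = 0 by apply: hm_ip_def; rewrite HT hm_ip0l.
  have hY : forall p u, Y *m u = vecp p (Wadj (T (W (mkx p u)))).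
    by move=> p u; rewrite hc vecp_bt vecp_mkx eqxx.
  have S1 : (Y <= P)%MS.
    rewrite submxE; apply/eqP/matrixP => r j.
    rewrite colmul.
    rewrite (hY (pidx r).2) (W_ker HS); last by apply: Pcol; exact: mulmx_coker.
    by rewrite hT0 (Wadj0 HS) vecp0 !mxE.
  have S2 : (Y^T <= P^T)%MS.
    rewrite submxE; apply/eqP/matrixP => j i.
    set z := col i (cokermx P^T).
    have Pz : P^T *m z = 0 by apply: Pcol; exact: mulmx_coker.
    set u := map_mx (@Num.conj C) z.
    have Pu : P *m u = 0.
      by rewrite /u -(map_mxCK P) -map_mxM Psa Pz map_mx0.
    have -> : (Y^T *m cokermx P^T) j i = (adjmx u *m (Y *m delta_mx j (0 : 'I_1))) 0 0.
      rewrite colmul -/z !mxE; apply: eq_bigr => k _.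
      by rewrite mul_delta_col /adjmx /u !mxE conjCK mulrC.
    rewrite (hY (pidx j).2). 
    have := perp HS u (pidx j).2 (T (W (mkx (pidx j).2 (delta_mx j (0 : 'I_1))))) Pu.
    move=> ->; by rewrite !mxE.
  have YB : Y = (Y *m pinvmx P) *m P by symmetry; exact: (mulmxKpV S1).
  have YA : Y = P *m (Y^T *m pinvmx P^T)^T.
    have := mulmxKpV S2; move=> /(congr1 trmx); rewrite trmx_mul !trmxK => EQ.
    by symmetry.
  set A := (Y^T *m pinvmx P^T)^T.
  set Z := A *m pinvmx P.
  have YZ : Y = P *m Z *m P.
    by rewrite /Z {1}YB {1}YA !mulmxA.
  exists (n * m)%N, (fun b => P *m Z *m delta_mx b 0), (fun b => P *m delta_mx b 0).
  split.
    by move=> b; split; [exists (Z *m delta_mx b 0); rewrite mulmxA | exists (delta_mx b 0)].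
  rewrite YZ; apply/matrixP => r s; rewrite summxE [LHS]mxE.
  apply: eq_bigr => b _; rewrite etensE -!colE.
  have -> : adjmx (col b P) = row b P.
    by rewrite -{2}PadjP /adjmx; apply/matrixP => i j; rewrite !mxE.
  by rewrite !mxE big_ord1 !mxE.
- move=> [K [vs [ws [hvw ->]]]].
  have [G PGP'] : exists G, P *m G *m P = P by exists (pinvmx P).
  have hv : forall v, inV Phi v -> v = P *m (G *m v).
    by move=> v [w ->]; rewrite !mulmxA PGP'.
  set Z := \sum_(k < K) (G *m vs k) *m adjmx (G *m ws k).
  have tZ : \sum_(k < K) etens (vs k) (barv (ws k)) = P *m Z *m P.
    rewrite /Z mulmx_sumr mulmx_suml; apply: eq_bigr => k _.
    rewrite etensE {1}(hv _ (hvw k).1) {1}(hv _ (hvw k).2).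
    by rewrite adjmxM PadjP !mulmxA.
  rewrite tZ.
  exists (unidpi (P *m Z *m P)); split; last first.
    by apply/matrixP => r s; rewrite idpi_unidpi /tensor_ident [RHS]mxE.
  exists (fun e => W (bt_act (unidpi Z) (Wadj e))); split.
    exists (fun e => W (bt_act (unidpi (adjmx Z)) (Wadj e))) => x y.
    rewrite HS.1 ipM_bt hm_ip_adj HS.1; exact: ipM_sym.
  move=> x; rewrite !HS.2; apply: vecp_inj => p.
  by rewrite !vecp_bt !idpi_unidpi !mulmxA.
Qed.
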